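(* Let $X,Y$ be Banach spaces, $T:X\to Y$ a bounded linear operator, $1\le p\le 2$ and $c>0$. Then $T$ is uniformly $p$-smooth with constant $c$ if and only if $T$ has strong martingale type $p$ with constant $c$.
   Context: Dyadic setting: for $k=0,1,2,\dots$, $\mathcal F_k$ is the $\sigma$-algebra on $[0,1)$ generated by the dyadic intervals $[i/2^k,(i+1)/2^k)$, $i=0,\dots,2^k-1$ (so $\mathcal F_0$ is trivial), with Lebesgue measure. A sequence $d_1,\dots,d_n$ of $X$-valued functions on $[0,1)$ is a sequence of differences of a dyadic martingale if each $d_k$ is $\mathcal F_k$-measurable and $\mathbb E(d_k\mid\mathcal F_{k-1})=0$. For $f:[0,1)\to X$, $\|f|L_p\|=(\int_0^1\|f(t)\|^p\,dt)^{1/p}$. $T$ is uniformly $p$-smooth with constant $c$ if for all $x\in X$, $y\in Y$: $\left(\frac{\|y+Tx\|^p+\|y-Tx\|^p}{2}-\|y\|^p\right)^{1/p}\le c\|x\|$. $T$ has strong martingale type $p$ with constant $c$ if for all $n\in\mathbb N$, all $y\in Y$ and all sequences $d_1,\dots,d_n$ of $X$-valued differences of dyadic martingales: $\left\|y+\sum_{k=1}^nTd_k\Big|L_p\right\|\le\left(\|y\|^p+c^p\sum_{k=1}^n\|d_k|L_p\|^p\right)^{1/p}$. *)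

(* Defs.v *)
From HB Require Import structures.
From mathcomp Require Import all_boot all_order all_algebra.
From mathcomp Require Import all_classical all_reals all_analysis.
Import Order.TTheory GRing.Theory Num.Theory.
Import numFieldNormedType.Exports.
Set Implicit Arguments. Unset Strict Implicit. Unset Printing Implicit Defensive.
Local Open Scope classical_set_scope.
Local Open Scope ring_scope.

Section dyadic.
Context {R : realType}.

Definition dyadic_atom (k i : nat) : set R :=
  `[ (i%:R / 2 ^+ k), (i.+1%:R / 2 ^+ k) [.

(* f : [0,1) -> X (represented as R -> X; values outside [0,1) are irrelevant)
   is F_k-measurable: F_k is generated by the finite partition of [0,1) into
   the atoms dyadic_atom k i, so measurability means constancy on each atom. *)
Definition dyadic_measurable {X : Type} (k : nat) (f : R -> X) : Prop :=
  forall i : nat, (i < 2 ^ k)%N ->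
  forall s t, dyadic_atom k i s -> dyadic_atom k i t -> f s = f t.

(* E(d | F_{k-1}) for an F_k-measurable d (k >= 1): on the atom
   dyadic_atom (k-1) i it equals the average of d over that atom, i.e. the
   mean of the values of d on its two halves dyadic_atom k (2i), dyadic_atom k (2i+1). *)
Definition dyadic_cond_exp_value {X : normedModType R} (k : nat) (d : R -> X)
  (i : nat) : X :=
  2^-1 *: (d ((i.*2)%:R / 2 ^+ k) + d ((i.*2).+1%:R / 2 ^+ k)).

Definition dyadic_mart_diff {X : normedModType R} (k : nat) (d : R -> X) : Prop :=
  dyadic_measurable k d /\
  forall i : nat, (i < 2 ^ k.-1)%N -> dyadic_cond_exp_value k d i = 0.

Definition Lp_norm {X : normedModType R} (p : R) (f : R -> X) : R :=
  (fine (\int[lebesgue_measure]_(t in `[0%R, 1%R[) ((`|f t| `^ p)%:E))) `^ p^-1.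

Definition bounded_op {X Y : normedModType R} (T : X -> Y) : Prop :=
  exists M : R, forall x, `|T x| <= M * `|x|.

Definition uniformly_p_smooth {X Y : normedModType R} (T : X -> Y) (p c : R) : Prop :=
  forall (x : X) (y : Y),
    ((`|y + T x| `^ p + `|y - T x| `^ p) / 2 - `|y| `^ p) `^ p^-1 <= c * `|x|.

Definition strong_martingale_type {X Y : normedModType R} (T : X -> Y) (p c : R) : Prop :=
  forall (n : nat) (y : Y) (d : nat -> R -> X),
    (forall k, (1 <= k <= n)%N -> dyadic_mart_diff k (d k)) ->
    Lp_norm p (fun t => y + \sum_(1 <= k < n.+1) T (d k t))
      <= (`|y| `^ p + c `^ p * \sum_(1 <= k < n.+1) (Lp_norm p (d k)) `^ p) `^ p^-1.

End dyadic.

(* Main.v *)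
Require Import Defs.
From HB Require Import structures.
From mathcomp Require Import all_boot all_order all_algebra.
From mathcomp Require Import all_classical all_reals all_analysis.
From mathcomp Require Import measurable_realfun lebesgue_integral.
From mathcomp Require Import ring lra.
Import Order.TTheory GRing.Theory Num.Theory.
Import numFieldNormedType.Exports.
Local Open Scope ring_scope.

Section S.
Context {R : realType}.
Local Open Scope classical_set_scope.

Definition pt (n i : nat) : R := i%:R / 2 ^+ n.

Lemma pt_ge0 n i : 0 <= pt n i.
Proof. by rewrite /pt divr_ge0 // exprn_ge0. Qed.

Lemma pt_lt n {i j} : (i < j)%N -> pt n i < pt n j.
Proof. by move=> ij; rewrite /pt ltr_pM2r ?invr_gt0 ?exprn_gt0 // ltr_nat. Qed.

Lemma atom_pt n i : dyadic_atom n i (pt n i).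
Proof.
by rewrite /dyadic_atom /= in_itv /= lexx /= (pt_lt n (ltnSn i)).
Qed.

Lemma step_integral (g : R -> R) n m :
  (m <= 2 ^ n)%N ->
  (forall t, 0 <= g t) ->
  (forall i, (i < 2 ^ n)%N -> forall t, dyadic_atom n i t -> g t = g (pt n i)) ->
  measurable_fun (`[0%R, (pt n m)[ : set R) (fun t => (g t)%:E) /\
  (\int[lebesgue_measure]_(t in `[0%R, (pt n m)[) (g t)%:E =
    (\sum_(0 <= i < m) g (pt n i) / 2 ^+ n)%:E)%E.
Proof.
move=> + g0 hg; elim: m => [_|m IH hm].
  have -> : `[0%R, pt n 0[ = set0 :> set R.
    by apply/seteqP; split=> t //=; rewrite in_itv /= /pt mul0r => /andP[] a b; lra.
  by rewrite integral_set0 big_geq //; split => //; exact: measurable_fun_set0.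
have [IHm IHi] := IH (ltnW hm).
have eqU : `[0%R, pt n m.+1[ = `[0%R, pt n m[ `|` dyadic_atom n m.
  apply/seteqP; split=> t /=; rewrite /dyadic_atom /= !in_itv /=.
    move=> /andP[t0 t1]; have [tm|tm] := ltP t (pt n m).
      by left; apply/andP; split.
    by right; apply/andP; split.
  have := pt_ge0 n m; have := pt_lt n (ltnSn m).
  move=> h1 h2 [/andP[a b]|/andP[a b]]; apply/andP; split => //; try lra.
  by have a' : pt n m <= t by []; lra.
have mA : measurable_fun (dyadic_atom n m : set R) (fun t => (g t)%:E).
  apply: (eq_measurable_fun (cst (g (pt n m))%:E)); last exact: measurable_cst.
  by move=> t; rewrite inE => /(hg m hm) /= ->.
rewrite eqU; split; first by apply/measurable_funU => //; exact: measurable_itv.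
have mI : measurable (`[0%R, pt n m[ : set R) by exact: measurable_itv.
have mAt : measurable (dyadic_atom n m : set R) by rewrite /dyadic_atom; exact: measurable_itv.
have mU : measurable_fun (`[0%R, pt n m[ `|` dyadic_atom n m) (fun t => (g t)%:E).
  by apply/measurable_funU.
have h0 : forall t, (`[0%R, pt n m[ `|` dyadic_atom n m) t -> (0 <= (g t)%:E)%E.
  by move=> t _; rewrite lee_fin.
have hd : [disjoint `[0%R, pt n m[ & dyadic_atom n m]%classic.
  apply/disj_setPS => t /=; rewrite /dyadic_atom /= !in_itv /= => -[/andP[_ a] /andP[b _]].
  by have b' : pt n m <= t by []; have := lt_le_trans a b'; rewrite ltxx.
rewrite ge0_integral_setU //.
rewrite IHi (eq_integral (cst (g (pt n m))%:E)); last first.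
  by move=> t; rewrite inE => /(hg m hm) ->.
rewrite integral_cst; last by rewrite /dyadic_atom; exact: measurable_itv.
have hl : (lebesgue_measure (dyadic_atom n m : set R)) = (pt n m.+1 - pt n m)%:E.
  by rewrite /dyadic_atom lebesgue_measure_itv /= lte_fin (pt_lt n (ltnSn m)).
rewrite (_ : (_ * _)%E = ((g (pt n m)) * (pt n m.+1 - pt n m))%:E); last first.
  by rewrite EFinM; congr (_ * _)%E; exact: hl.
rewrite -EFinD.
rewrite big_nat_recr //=; congr (_ + _)%:E.
by rewrite /pt -mulrBl -natrB // subSnn mul1r mulrC.
Qed.

Lemma pt_le n {i j} : (i <= j)%N -> pt n i <= pt n j.
Proof. by move=> ij; rewrite /pt ler_pM2r ?invr_gt0 ?exprn_gt0 // ler_nat. Qed.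

Lemma pt_full n : pt n (2 ^ n) = 1.
Proof. by rewrite /pt natrX divff // expf_neq0. Qed.

Lemma intg (g : R -> R) n :
  (forall t, 0 <= g t) ->
  (forall i, (i < 2 ^ n)%N -> forall t, dyadic_atom n i t -> g t = g (pt n i)) ->
  (\int[lebesgue_measure]_(t in `[0%R, 1%R[) (g t)%:E =
    (\sum_(0 <= i < 2 ^ n) g (pt n i) / 2 ^+ n)%:E)%E.
Proof.
move=> g0 hg; have [_ <-] := step_integral g n (2 ^ n) (leqnn _) g0 hg.
by rewrite pt_full.
Qed.

Lemma pt_coarse k n q : (k <= n)%N -> pt k q = pt n (q * 2 ^ (n - k)).
Proof.
move=> kn; rewrite /pt natrM natrX.
have e : (2:R) ^+ n = 2 ^+ k * 2 ^+ (n - k) by rewrite -exprD subnKC.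
have h1 : (2:R) ^+ k != 0 by rewrite expf_neq0.
have h2 : (2:R) ^+ (n - k) != 0 by rewrite expf_neq0.
by rewrite e; field; rewrite h1 h2.
Qed.

Lemma atom_sub k n i (t : R) : (k <= n)%N -> dyadic_atom n i t ->
  dyadic_atom k (i %/ 2 ^ (n - k)) t.
Proof.
move=> kn; rewrite /dyadic_atom /= !in_itv /= => /andP[a b].
have M0 : (0 < 2 ^ (n - k))%N by rewrite expn_gt0.
apply/andP; split.
  have h : pt k (i %/ 2 ^ (n - k)) <= pt n i.
    by rewrite (pt_coarse _ _ _ kn) pt_le // leq_divM.
  by have a' : pt n i <= t by []; exact: le_trans h a'.
have h : pt n i.+1 <= pt k (i %/ 2 ^ (n - k)).+1.
  by rewrite (pt_coarse _ _ _ kn) pt_le // ltn_ceil.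
by have b' : t < pt n i.+1 by []; exact: lt_le_trans b' h.
Qed.

Lemma meas_up {Z : Type} k n (f : R -> Z) i (t : R) :
  dyadic_measurable k f -> (k <= n)%N -> (i < 2 ^ n)%N -> dyadic_atom n i t ->
  f t = f (pt n i).
Proof.
move=> hf kn hi ht.
have M0 : (0 < 2 ^ (n - k))%N by rewrite expn_gt0.
have h1 : (i %/ 2 ^ (n - k) < 2 ^ k)%N by rewrite ltn_divLR // -expnD subnKC.
have h2 := atom_sub _ _ _ _ kn ht.
have h3 := atom_sub _ _ _ _ kn (atom_pt n i).
exact: (hf _ h1 _ _ h2 h3).
Qed.

Lemma sum_pairs (f : nat -> R) M :
  \sum_(0 <= i < M.*2) f i = \sum_(0 <= j < M) (f j.*2 + f j.*2.+1).
Proof.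
elim: M => [|M IH]; first by rewrite !big_geq.
by rewrite doubleS !big_nat_recr //= IH addrA.
Qed.

End S.

Lemma arith {R : realType} (A B Zz C V e : R) : 0 < e -> (A + B) / 2 <= Zz + C * V ->
  A / (e * 2) + B / (e * 2) <= Zz / e + C * (V / (e * 2) + V / (e * 2)).
Proof.
move=> e0 h.
have en : e != 0 by rewrite gt_eqF.
have -> : A / (e * 2) + B / (e * 2) = ((A + B) / 2) / e by field.
have -> : Zz / e + C * (V / (e * 2) + V / (e * 2)) = (Zz + C * V) / e by field.
by rewrite ler_pM2r ?invr_gt0.
Qed.

Section Main.
Context {R : realType} {X Y : normedModType R} (T : {linear X -> Y}) (p c : R).

Definition Fs (y : Y) (d : nat -> R -> X) n (t : R) :=
  y + \sum_(1 <= k < n.+1) T (d k t).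
Definition Ssum y d n :=
  \sum_(0 <= i < 2 ^ n) `|Fs y d n (pt n i)| `^ p / 2 ^+ n.
Definition Dsum (f : R -> X) k :=
  \sum_(0 <= i < 2 ^ k) `|f (pt k i)| `^ p / 2 ^+ k.

Lemma sum_ge0 {Z : normedModType R} (f : R -> Z) n :
  0 <= \sum_(0 <= i < 2 ^ n) `|f (pt n i)| `^ p / 2 ^+ n.
Proof.
by apply: sumr_ge0 => i _; rewrite divr_ge0 ?powR_ge0 ?exprn_ge0.
Qed.

Lemma Fs_meas y d N n i t :
  (forall k, (1 <= k <= N)%N -> dyadic_mart_diff k (d k)) ->
  (n <= N)%N -> (i < 2 ^ n)%N -> dyadic_atom n i t ->
  Fs y d n t = Fs y d n (pt n i).
Proof.
move=> hd nN hi ht; rewrite /Fs; congr (_ + _).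
apply: eq_big_nat => k /andP[k1 kn]; congr (T _).
have hk : (1 <= k <= N)%N by rewrite k1 /= (leq_trans _ nN).
exact: (meas_up _ _ _ _ _ (hd k hk).1 kn hi ht).
Qed.

Lemma Lp_step {Z : normedModType R} (f : R -> Z) n :
  (forall i, (i < 2 ^ n)%N -> forall t, dyadic_atom n i t -> f t = f (pt n i)) ->
  Lp_norm p f = (\sum_(0 <= i < 2 ^ n) `|f (pt n i)| `^ p / 2 ^+ n) `^ p^-1.
Proof.
move=> hf; rewrite /Lp_norm (intg (fun t => `|f t| `^ p) n) //.
by move=> i hi t ht /=; rewrite (hf i hi t ht).
Qed.

Lemma Lp_pow {Z : normedModType R} (f : R -> Z) n : 0 < p ->
  (forall i, (i < 2 ^ n)%N -> forall t, dyadic_atom n i t -> f t = f (pt n i)) ->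
  Lp_norm p f `^ p = \sum_(0 <= i < 2 ^ n) `|f (pt n i)| `^ p / 2 ^+ n.
Proof.
move=> p0 hf; rewrite (Lp_step _ _ hf) -powRrM mulVf ?gt_eqF // powRr1 //.
exact: sum_ge0.
Qed.

Lemma smooth_sq z v : 0 < p -> 0 <= c -> uniformly_p_smooth T p c ->
  (`|z + T v| `^ p + `|z - T v| `^ p) / 2 <= `|z| `^ p + c `^ p * `|v| `^ p.
Proof.
move=> p0 c0 hs; pose w := (`|z + T v| `^ p + `|z - T v| `^ p) / 2 - `|z| `^ p.
have hw := hs v z; rewrite -/w in hw.
have hcv : 0 <= c `^ p * `|v| `^ p by rewrite mulr_ge0 ?powR_ge0.
have [w0|w0] := lerP w 0.
  by move: w0; rewrite /w; lra.
have : w <= c `^ p * `|v| `^ p.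
  rewrite -powRM // -[w]powRr1 ?(ltW w0) // -(@mulVf _ p) ?gt_eqF // powRrM.
  by rewrite ge0_ler_powR ?(ltW p0) // nnegrE ?powR_ge0 // mulr_ge0.
by rewrite /w; lra.
Qed.

Lemma FsS y d n t : Fs y d n.+1 t = Fs y d n t + T (d n.+1 t).
Proof. by rewrite /Fs big_nat_recr //= addrA. Qed.

Lemma main_ineq y d N : 0 < p -> 0 <= c -> uniformly_p_smooth T p c ->
  (forall k, (1 <= k <= N)%N -> dyadic_mart_diff k (d k)) ->
  forall n, (n <= N)%N ->
  Ssum y d n <= `|y| `^ p + c `^ p * \sum_(1 <= k < n.+1) Dsum (d k) k.
Proof.
move=> p0 c0 hs hd; elim => [_|n IH hn].
  rewrite /Ssum /Fs expn0 big_nat1 !big_geq // addr0 mulr0 addr0 expr0 divr1.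
  by [].
rewrite big_nat_recr //= mulrDr addrA.
apply: le_trans (lerD (IH (ltnW hn)) (lexx _)).
have e2 : (2 ^ n.+1 = (2 ^ n).*2)%N by rewrite expnS mul2n.
rewrite /Ssum /Dsum e2 !sum_pairs mulr_sumr -big_split /=.
apply: ler_sum_nat => j /andP[_ hj].
have hk : (0 < n.+1 <= N)%N by rewrite hn.
have [_ ce] := hd n.+1 hk.
have hce : 2^-1 *: (d n.+1 (pt n.+1 j.*2) + d n.+1 (pt n.+1 j.*2.+1)) = 0 := ce j hj.
have hneg : d n.+1 (pt n.+1 j.*2.+1) = - d n.+1 (pt n.+1 j.*2).
  move/eqP: hce; rewrite scaler_eq0 invr_eq0 pnatr_eq0 /= addrC addr_eq0.
  by move/eqP.
have m0 : dyadic_atom n j (pt (R:=R) n.+1 j.*2).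
  have := atom_sub n n.+1 j.*2 _ (leqnSn n) (atom_pt n.+1 j.*2).
  by rewrite subSnn expn1 -muln2 mulnK.
have m1 : dyadic_atom n j (pt (R:=R) n.+1 j.*2.+1).
  have := atom_sub n n.+1 j.*2.+1 _ (leqnSn n) (atom_pt n.+1 j.*2.+1).
  by rewrite subSnn expn1 divn2 /= uphalf_double.
rewrite !FsS (Fs_meas y d N n j (pt n.+1 j.*2) hd (ltnW hn) hj m0).
rewrite (Fs_meas y d N n j (pt n.+1 j.*2.+1) hd (ltnW hn) hj m1) hneg linearN normrN.
set z := Fs y d n (pt n j); set v := d n.+1 (pt n.+1 j.*2).
have key := smooth_sq z v p0 c0 hs.
rewrite exprSr; apply: arith => //; exact: exprn_gt0.
Qed.

End Main.

Lemma conv_half {R : realType} (p u v : R) : 1 <= p -> 0 <= u -> 0 <= v ->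
  (2^-1 * u + 2^-1 * v) `^ p <= 2^-1 * u `^ p + 2^-1 * v `^ p.
Proof.
move=> p1 u0 v0.
rewrite {2 4}(_ : 2^-1 = 1 - 2^-1); last by rewrite {2}(splitr 1) div1r addrK.
by apply: (convex_powR p1 (Itv01 _ _)) => //=;
  rewrite ?inE/= ?in_itv/= ?u0 ?v0// ?invr_ge0// invf_le1 ?ler1n.
Qed.

Lemma pow_inv_le {R : realType} (p a b : R) : 0 < p -> 0 <= a -> 0 <= b ->
  a `^ p^-1 <= b `^ p^-1 -> a <= b.
Proof.
move=> p0 a0 b0 h.
rewrite -[a]powRr1 // -[b]powRr1 // -(@mulVf _ p) ?gt_eqF // !powRrM.
by rewrite ge0_ler_powR ?(ltW p0) // nnegrE powR_ge0.
Qed.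

Lemma smooth_lower {R : realType} {Y : normedModType R} (p : R) (y w : Y) :
  1 <= p -> `|y| `^ p <= (`|y + w| `^ p + `|y - w| `^ p) / 2.
Proof.
move=> p1.
have h2 : `|y + y| <= `|y + w| + `|y - w|.
  by rewrite (_ : y + y = (y + w) + (y - w)) ?ler_normD // addrACA subrr addr0.
rewrite -mulr2n normrMn mulr2n in h2.
have h : `|y| <= 2^-1 * `|y + w| + 2^-1 * `|y - w| by lra.
apply: (le_trans (y := (2^-1 * `|y + w| + 2^-1 * `|y - w|) `^ p)).
  by rewrite ge0_ler_powR ?nnegrE ?(le_trans _ p1) // addr_ge0 // mulr_ge0.
apply: le_trans (conv_half p _ _ p1 _ _) _ => //.
by rewrite mulrDl ![_ `^ p / 2]mulrC.
Qed.

Lemma sum2 {R : realType} (F : nat -> R) : \sum_(0 <= i < 2 ^ 1) F i = F 0%N + F 1%N.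
Proof. by rewrite expn1 big_nat_recr //= big_nat1. Qed.

Theorem theorem2 (R : realType) (X Y : completeNormedModType R)
  (T : {linear X -> Y}) (p c : R) :
  bounded_op T -> 1 <= p <= 2 -> 0 < c ->
  (uniformly_p_smooth T p c <-> strong_martingale_type T p c).
Proof.
move=> _ /andP[p1 p2] c0.
have p0 : 0 < p by apply: lt_le_trans p1.
split.
- move=> hs n y d hd.
  rewrite (Lp_step p (fun t => y + \sum_(1 <= k < n.+1) T (d k t)) n); last first.
    by move=> i hi t ht; exact: (Fs_meas T y d n n i t hd (leqnn n) hi ht).
  have -> : \sum_(1 <= k < n.+1) Lp_norm p (d k) `^ p = \sum_(1 <= k < n.+1) Dsum p (d k) k.
    apply: eq_big_nat => k /andP[k1 kn].
    have hk : (0 < k <= n)%N by apply/andP.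
    exact: (Lp_pow p (d k) k p0
      (fun i hi t ht => meas_up k k (d k) i t (hd k hk).1 (leqnn k) hi ht)).
  apply: (ge0_ler_powR (r := p^-1)).
  + by rewrite invr_ge0 ltW.
  + by rewrite nnegrE; exact: (sum_ge0 p (fun t => y + \sum_(1 <= k < n.+1) T (d k t)) n).
  + rewrite nnegrE addr_ge0 ?powR_ge0 // mulr_ge0 ?powR_ge0 //.
    by apply: sumr_ge0 => k _; exact: (sum_ge0 p (d k) k).
  + exact: (main_ineq T p c y d n p0 (ltW c0) hs hd n (leqnn n)).
- move=> hm x y.
  pose d := fun (_ : nat) (t : R) => if t < 2^-1 then x else - x.
  have hd : forall k, (0 < k <= 1)%N -> dyadic_mart_diff k (d k).
    move=> k /andP[k0 k1]; have -> : k = 1%N by apply/eqP; rewrite eqn_leq k1 k0.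
    split.
    + move=> i hi s t; rewrite /dyadic_atom /= !in_itv /= expr1.
      case: i hi => [|[|//]] _ /=; rewrite /d ?mulr0n ?mul0r ?mulr1n ?div1r.
      * by move=> /andP[_ hs1] /andP[_ ht1]; rewrite hs1 ht1.
      * by move=> /andP[hs0 _] /andP[ht0 _]; rewrite ltNge hs0 ltNge ht0.
    + move=> i; rewrite expn0; case: i => [|//] _.
      rewrite /dyadic_cond_exp_value /d /= expr1 ?mulr0n ?mul0r ?mulr1n ?div1r.
      by rewrite invr_gt0 ltr0n ltxx /= subrr scaler0.
  have H := hm 1%N y d hd.
  have hm1 : forall i, (i < 2 ^ 1)%N -> forall t, dyadic_atom 1 i t -> d 1%N t = d 1%N (pt 1 i).
    by move=> i hi t ht; exact: (meas_up 1 1 (d 1%N) i t (hd 1%N isT).1 (leqnn 1) hi ht).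
  rewrite (Lp_step p (fun t => y + \sum_(1 <= k < 2) T (d k t)) 1) in H; last first.
    by move=> i hi t ht; exact: (Fs_meas T y d 1 1 i t hd (leqnn 1) hi ht).
  have e1 : \sum_(1 <= k < 2) Lp_norm p (d k) `^ p = Dsum p (d 1%N) 1.
    by rewrite big_nat1 (Lp_pow p (d 1%N) 1 p0 hm1).
  rewrite e1 /Dsum in H.
  have d0 : d 1%N (pt 1 0) = x by rewrite /d /pt mul0r invr_gt0 ltr0n.
  have d1 : d 1%N (pt 1 1) = - x by rewrite /d /pt expr1 div1r ltxx.
  move: H; rewrite !sum2 !big_nat1 d0 d1 linearN normrN expr1.
  move=> H.
  have a0 : 0 <= `|y + T x| `^ p / 2 + `|y - T x| `^ p / 2.
    by rewrite addr_ge0 // divr_ge0 // powR_ge0.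
  have b0 : 0 <= `|y| `^ p + c `^ p * (`|x| `^ p / 2 + `|x| `^ p / 2).
    by rewrite addr_ge0 ?powR_ge0 // mulr_ge0 ?powR_ge0 // addr_ge0 // divr_ge0 // powR_ge0.
  have H' := pow_inv_le p _ _ p0 a0 b0 H.
  rewrite -splitr in H'.
  have hl := smooth_lower p y (T x) p1.
  pose w := (`|y + T x| `^ p + `|y - T x| `^ p) / 2 - `|y| `^ p.
  have w0 : 0 <= w by rewrite /w subr_ge0.
  have wle : w <= (c * `|x|) `^ p.
    by rewrite powRM ?(ltW c0) // /w; lra.
  rewrite -/w; apply: (le_trans (y := ((c * `|x|) `^ p) `^ p^-1)).
    by rewrite ge0_ler_powR ?invr_ge0 ?(ltW p0) // nnegrE powR_ge0.
  by rewrite -powRrM mulfV ?gt_eqF // powRr1 // mulr_ge0 // ltW.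
Qed.
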